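(* Let $X$ be a finite connected poset, $F$ a field and $\varphi$ a Jordan automorphism of $I(X,F)$. Then there exist an invertible $\beta\in I(X,F)$ and a bijection $\lambda:X\to X$ such that $\varphi(e_x)=\beta e_{\lambda(x)}\beta^{-1}$ for all $x\in X$.
   Context: $I(X,F)$ is the incidence algebra of the locally finite poset $X$ over $F$ (functions $f:X\times X\to F$ vanishing unless $x\le y$, with product $(fg)(x,y)=\sum_{x\le z\le y}f(x,z)g(z,y)$). For $x\le y$, $e_{xy}$ is the function equal to $1$ at $(x,y)$ and $0$ elsewhere, and $e_x:=e_{xx}$. A poset is connected if any two elements are joined by a finite sequence of elements in which consecutive elements are comparable. A Jordan automorphism of an associative algebra $A$ is a bijective linear map $\varphi:A\to A$ with $\varphi(a^2)=\varphi(a)^2$ and $\varphi(aba)=\varphi(a)\varphi(b)\varphi(a)$ for all $a,b\in A$. *)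

(* Defs.v *)
From HB Require Import structures.
From mathcomp Require Import all_boot all_order all_algebra.
Set Implicit Arguments. Unset Strict Implicit. Unset Printing Implicit Defensive.
Import Order.TTheory GRing.Theory.
Local Open Scope ring_scope.
Local Open Scope order_scope.

Section Incidence.
Variables (d : Order.disp_t) (X : finPOrderType d) (F : fieldType).

Definition lex (a b : X) : bool := (a <= b)%O.

Definition is_inc (f : {ffun X * X -> F}) : bool :=
  [forall p : X * X, ~~ lex p.1 p.2 ==> (f p == 0%R)].

Record incidence := Inc { inc_val :> {ffun X * X -> F}; inc_valP : is_inc inc_val }.

HB.instance Definition _ := [isSub for inc_val].

Lemma is_incP (f : {ffun X * X -> F}) :
  (forall x y, ~~ lex x y -> f (x, y) = 0%R) -> is_inc f.
Proof. by move=> H; apply/forallP => -[x y]; apply/implyP => /= /H ->. Qed.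

Definition raw_mul (f g : incidence) : {ffun X * X -> F} :=
  [ffun p : X * X => \sum_(z : X | lex p.1 z && lex z p.2) f (p.1, z) * g (z, p.2)]%R.

Lemma raw_mulP f g : is_inc (raw_mul f g).
Proof.
apply: is_incP => x y nxy; rewrite ffunE /= big1 // => z /andP[xz zy].
by move: nxy; rewrite /lex (le_trans xz zy).
Qed.

Definition inc_mul (f g : incidence) : incidence := Inc (raw_mulP f g).

Lemma raw_addP (f g : incidence) : is_inc [ffun p : X * X => f p + g p]%R.
Proof.
apply: is_incP => x y nxy; rewrite ffunE.
by move/forallP: (inc_valP f) => /(_ (x, y)) /implyP /(_ nxy) /eqP ->;
   move/forallP: (inc_valP g) => /(_ (x, y)) /implyP /(_ nxy) /eqP ->; rewrite addr0.
Qed.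

Definition inc_add (f g : incidence) : incidence := Inc (raw_addP f g).

Lemma raw_scaleP (a : F) (f : incidence) : is_inc [ffun p : X * X => a * f p]%R.
Proof.
apply: is_incP => x y nxy; rewrite ffunE.
by move/forallP: (inc_valP f) => /(_ (x, y)) /implyP /(_ nxy) /eqP ->; rewrite mulr0.
Qed.

Definition inc_scale (a : F) (f : incidence) : incidence := Inc (raw_scaleP a f).

Lemma raw_oneP : is_inc [ffun p : X * X => ((p.1 == p.2)%:R : F)].
Proof.
apply: is_incP => x y nxy; rewrite ffunE /=.
by case: eqP nxy => // ->; rewrite /lex lexx.
Qed.

Definition inc_one : incidence := Inc raw_oneP.

Lemma raw_eP (x : X) : is_inc [ffun p : X * X => (((p.1 == x) && (p.2 == x))%:R : F)].
Proof.
apply: is_incP => a b nab; rewrite ffunE /=.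
by case: eqP nab => // ->; case: eqP => // ->; rewrite /lex lexx.
Qed.

Definition inc_e (x : X) : incidence := Inc (raw_eP x).

Definition jordan_automorphism (phi : incidence -> incidence) : Prop :=
  [/\ bijective phi,
      (forall (a : F) (f g : incidence),
          phi (inc_add (inc_scale a f) g) = inc_add (inc_scale a (phi f)) (phi g)),
      (forall f, phi (inc_mul f f) = inc_mul (phi f) (phi f)) &
      (forall f g, phi (inc_mul (inc_mul f g) f) = inc_mul (inc_mul (phi f) (phi g)) (phi f))].

End Incidence.

Definition poset_connected (d : Order.disp_t) (X : finPOrderType d) : Prop :=
  forall x y : X, connect (fun a b : X => (a <= b) || (b <= a)) x y.

(* Main.v *)
Require Import Defs.
From HB Require Import structures.
From mathcomp Require Import all_boot all_order all_algebra.
Set Implicit Arguments. Unset Strict Implicit. Unset Printing Implicit Defensive.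
Import Order.TTheory GRing.Theory.
Local Open Scope ring_scope.

Section R.
Variables (d : Order.disp_t) (X : finPOrderType d) (F : fieldType).
Local Notation I := (incidence X F).

HB.instance Definition _ := [Equality of I by <:].
HB.instance Definition _ := [Choice of I by <:].

Lemma incP (f g : I) : (forall x y, f (x, y) = g (x, y)) -> f = g.
Proof. by move=> H; apply: val_inj; apply/ffunP => -[x y]; exact: H. Qed.

Lemma inc0 (f : I) (x y : X) : ~~ (x <= y)%O -> f (x, y) = 0.
Proof.
by move=> nxy; move/forallP: (inc_valP f) => /(_ (x, y)) /implyP /(_ nxy) /eqP.
Qed.

Lemma zeroP : is_inc [ffun p : X * X => (0 : F)].
Proof. by apply: is_incP => x y _; rewrite ffunE. Qed.
Definition inc_zero : I := Inc zeroP.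
Definition inc_opp (f : I) : I := inc_scale (-1) f.

Lemma addE (f g : I) (x y : X) : inc_add f g (x, y) = f (x, y) + g (x, y).
Proof. by rewrite /= ffunE. Qed.
Lemma scaleE a (f : I) (x y : X) : inc_scale a f (x, y) = a * f (x, y).
Proof. by rewrite /= ffunE. Qed.
Lemma zeroE (x y : X) : inc_zero (x, y) = 0.
Proof. by rewrite /= ffunE. Qed.
Lemma oneE (x y : X) : inc_one X F (x, y) = (x == y)%:R.
Proof. by rewrite /= ffunE. Qed.
Lemma eE (z x y : X) : inc_e F z (x, y) = ((x == z) && (y == z))%:R.
Proof. by rewrite /= ffunE. Qed.

Lemma mulE (f g : I) (x y : X) : inc_mul f g (x, y) = \sum_z f (x, z) * g (z, y).
Proof.
rewrite /= ffunE /= [RHS](bigID (fun z => lex x z && lex z y)) /= [X in _ = _ + X]big1 ?addr0 //.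
move=> z; rewrite negb_and => /orP[] h; first by rewrite inc0 ?mul0r.
by rewrite (inc0 g) ?mulr0.
Qed.

Lemma addA : associative (@inc_add _ X F).
Proof. by move=> f g h; apply: incP => x y; rewrite !addE addrA. Qed.
Lemma addC : commutative (@inc_add _ X F).
Proof. by move=> f g; apply: incP => x y; rewrite !addE addrC. Qed.
Lemma add0 : left_id inc_zero (@inc_add _ X F).
Proof. by move=> f; apply: incP => x y; rewrite !addE zeroE add0r. Qed.
Lemma addN : left_inverse inc_zero inc_opp (@inc_add _ X F).
Proof. by move=> f; apply: incP => x y; rewrite !addE scaleE zeroE mulN1r addNr. Qed.

HB.instance Definition _ := GRing.isZmodule.Build I addA addC add0 addN.

Lemma mulA : associative (@inc_mul _ X F).
Proof.
move=> f g h; apply: incP => x y; rewrite !mulE.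
under eq_bigr do rewrite mulE big_distrr /=.
under [RHS]eq_bigr do rewrite mulE big_distrl /=.
rewrite exchange_big /=; apply: eq_bigr => z _; apply: eq_bigr => w _.
by rewrite mulrA.
Qed.
Lemma mul1 : left_id (inc_one X F) (@inc_mul _ X F).
Proof.
move=> f; apply: incP => x y; rewrite mulE (bigD1 x) //= oneE eqxx mul1r big1 ?addr0 //.
by move=> z zx; rewrite oneE eq_sym (negbTE zx) mul0r.
Qed.
Lemma mulr1' : right_id (inc_one X F) (@inc_mul _ X F).
Proof.
move=> f; apply: incP => x y; rewrite mulE (bigD1 y) //= oneE eqxx mulr1 big1 ?addr0 //.
by move=> z zx; rewrite oneE (negbTE zx) mulr0.
Qed.
Lemma mulDl' : left_distributive (@inc_mul _ X F) (@inc_add _ X F).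
Proof.
move=> f g h; apply: incP => x y; rewrite addE !mulE -big_split /=.
by apply: eq_bigr => z _; rewrite addE mulrDl.
Qed.
Lemma mulDr' : right_distributive (@inc_mul _ X F) (@inc_add _ X F).
Proof.
move=> f g h; apply: incP => x y; rewrite addE !mulE -big_split /=.
by apply: eq_bigr => z _; rewrite addE mulrDr.
Qed.

HB.instance Definition _ := GRing.Zmodule_isPzRing.Build I mulA mul1 mulr1' mulDl' mulDr'.

Lemma test (f g : I) : (f * g = inc_mul f g) /\ (f + g = inc_add f g) /\ (1 = inc_one X F :> I) /\ (0 = inc_zero).
Proof. by []. Qed.

Lemma scale1 (f : I) : inc_scale 1 f = f.
Proof. by apply: incP => x y; rewrite scaleE mul1r. Qed.

Lemma sumE (J : finType) (G : J -> I) (x y : X) : (\sum_j G j) (x, y) = \sum_j G j (x, y).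
Proof.
apply: (big_morph (fun f : I => f (x, y))) => [f g|]; first exact: addE.
exact: zeroE.
Qed.

Lemma diag_mul (f g : I) (x : X) : (f * g) (x, x) = f (x, x) * g (x, x).
Proof.
rewrite [LHS]mulE (bigD1 x) //= big1 ?addr0 // => z zx.
case: (boolP (x <= z)%O) => xz; last by rewrite inc0 ?mul0r.
case: (boolP (z <= x)%O) => zx'; last by rewrite (@inc0 g z x) ?mulr0.
have zx2 : z = x by apply/le_anti; rewrite zx' xz.
by rewrite zx2 eqxx in zx.
Qed.

Lemma idem_diag0 (g : I) : g * g = g -> (forall x, g (x, x) = 0) -> g = 0.
Proof.
move=> gg g0; apply: incP => x y; rewrite zeroE.
have [n] := ubnP #|[set w | (x <= w <= y)%O]|.
elim: n x y => [|n IH] x y; first by rewrite ltn0.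
move=> Hc; case: (boolP (x <= y)%O) => xy; last by rewrite inc0.
rewrite -gg mulE big1 // => z _.
case: (eqVneq z x) => [->|zx]; first by rewrite g0 mul0r.
case: (eqVneq z y) => [->|zy]; first by rewrite g0 mulr0.
case: (boolP (x <= z)%O) => xz; last by rewrite inc0 ?mul0r.
case: (boolP (z <= y)%O) => zy'; last by rewrite (@inc0 g z y) ?mulr0.
rewrite IH ?mul0r //.
move: Hc; rewrite ltnS => Hc; apply: leq_trans Hc; apply: proper_card; apply/properP; split.
  apply/subsetP => w; rewrite !inE => /andP[xw wz]; rewrite xw /=.
  exact: le_trans wz zy'.
exists y; rewrite !inE ?xy ?lexx //=.
apply/negP => yz; have zy2 : z = y by apply/le_anti; rewrite zy' yz.
by rewrite zy2 eqxx in zy.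
Qed.

Lemma eeE (a b : X) : inc_e F a * inc_e F b = if a == b then inc_e F a else 0.
Proof.
apply: incP => x y; rewrite mulE.
case: (eqVneq a b) => [<-|ab].
  rewrite (bigD1 a) //= big1 ?addr0; first by rewrite !eE eqxx andbT andTb -natrM mulnb.
  by move=> z za; rewrite !eE (negbTE za) ?andbF ?andFb ?mul0r ?mulr0.
rewrite zeroE big1 // => z _; rewrite !eE.
case: (eqVneq z a) => [->|za]; last by rewrite andbF mul0r.
by rewrite (negbTE ab) ?andbF ?andFb mulr0.
Qed.

Lemma efe (f : I) (a : X) : inc_e F a * f * inc_e F a = inc_scale (f (a, a)) (inc_e F a).
Proof.
apply: incP => x y; rewrite scaleE mulE (bigD1 a) //= big1 ?addr0; last first.
  by move=> z za; rewrite !eE (negbTE za) ?andbF ?andFb ?mul0r ?mulr0.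
rewrite mulE (bigD1 a) //= big1 ?addr0; last first.
  by move=> z za; rewrite !eE (negbTE za) ?andbF ?andFb ?mul0r ?mulr0.
rewrite !eE eqxx !andbT.
by case: (x == a); case: (y == a); rewrite /= ?mulr0 ?mul0r ?mulr1 ?mul1r.
Qed.

Lemma sum_e : \sum_z inc_e F z = 1.
Proof.
apply: incP => x y; rewrite sumE oneE.
case: (eqVneq x y) => [<-|xy].
  rewrite (bigD1 x) //= big1 ?addr0; first by rewrite eE eqxx.
  by move=> z zx; rewrite eE eq_sym (negbTE zx).
rewrite big1 // => z _; rewrite eE.
case: (eqVneq x z) => [<-|xz] //=.
by rewrite eq_sym (negbTE xy).
Qed.

Lemma idemF (c : F) : c * c = c -> c = 0 \/ c = 1.
Proof.
move=> h; have : c * (c - 1) = 0 by rewrite mulrBr h mulr1 subrr.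
by move/eqP; rewrite mulf_eq0 subr_eq0 => /orP[] /eqP; [left|right].
Qed.

Lemma main (phi : I -> I) :
  bijective phi ->
  (forall a f g, phi (inc_add (inc_scale a f) g) = inc_add (inc_scale a (phi f)) (phi g)) ->
  (forall f, phi (f * f) = phi f * phi f) ->
  (forall f g, phi (f * g * f) = phi f * phi g * phi f) ->
  exists (beta beta_inv : I) (lambda : X -> X),
    [/\ beta * beta_inv = 1, beta_inv * beta = 1, bijective lambda &
        forall x : X, phi (inc_e F x) = beta * inc_e F (lambda x) * beta_inv].
Proof.
move=> bij lin sq tr.
have phiD f g : phi (f + g) = phi f + phi g.
  by have := lin 1 f g; rewrite !scale1.
have phi0 : phi 0 = 0.
  have := lin (-1) 0 0.
  by change (phi (- 0 + 0) = - phi 0 + phi 0 -> phi 0 = 0); rewrite !addNr.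
have inj : injective phi by apply: bij_inj.
pose f y := phi (inc_e F y).
have fidem y : f y * f y = f y by rewrite /f -sq eeE eqxx.
have forth a b : a != b -> f a * f b = 0.
  move=> ab; have ba : b != a by rewrite eq_sym.
  have h1 : f a * f b + f b * f a = 0.
    have E : (inc_e F a + inc_e F b) * (inc_e F a + inc_e F b) = inc_e F a + inc_e F b.
      by rewrite mulrDl !mulrDr !eeE (negbTE ab) (negbTE ba) !eqxx addr0 add0r.
    have := sq (inc_e F a + inc_e F b).
    rewrite E !phiD mulrDl !mulrDr -/(f a) -/(f b) !fidem.
    move: (f a) (f b) (f a * f b) (f b * f a) => u v w z.
    rewrite -addrA => /addrI; rewrite addrA -{1}[v]add0r => /addIr <-.
    done.
  have h2 : f a * f b * f a = 0.
    by rewrite /f -tr eeE (negbTE ab) mul0r phi0.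
  have := congr1 (fun w => f a * w) h1; rewrite mulrDr mulr0 !mulrA fidem h2 addr0.
  done.
have fnz y : f y != 0.
  apply/eqP => h; have : inc_e F y = 0 by apply: inj; rewrite phi0.
  move/(congr1 (fun g : I => g (y, y))); rewrite eE zeroE eqxx /=.
  by move/eqP; rewrite oner_eq0.
have fdiag y : [exists x, f y (x, x) == 1].
  case: (boolP [exists x, f y (x, x) == 1]) => [//|/existsPn hn].
  exfalso; move/eqP: (fnz y); apply; apply: idem_diag0 => // x.
  have := diag_mul (f y) (f y) x; rewrite fidem => /esym/idemF [] // h.
  by move: (hn x); rewrite h eqxx.
pose mu y := odflt y [pick x | f y (x, x) == 1].
have mu1 y : f y (mu y, mu y) = 1.
  rewrite /mu; case: pickP => [x /eqP //|].
  by move/existsP: (fdiag y) => [x hx] /(_ x); rewrite hx.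
have muinj : injective mu.
  move=> a b hab; apply/eqP; apply/negP => /negP ab.
  have := diag_mul (f a) (f b) (mu a); rewrite forth // zeroE mu1 hab mu1 mulr1.
  by move/eqP; rewrite eq_sym oner_eq0.
have mubij : bijective mu by apply: injF_bij.
pose beta := \sum_y f y * inc_e F (mu y).
pose beta' := \sum_y inc_e F (mu y) * f y.
have ee a b : inc_e F (mu a) * inc_e F (mu b) = if a == b then inc_e F (mu a) else 0.
  by rewrite eeE (inj_eq muinj).
have ff a b : f a * f b = if a == b then f a else 0.
  by case: (eqVneq a b) => [->|ab]; rewrite ?fidem ?forth.
have fbeta y : f y * beta = f y * inc_e F (mu y).
  rewrite /beta mulr_sumr (bigD1 y) //= big1 ?addr0 ?mulrA ?fidem //.
  by move=> a ay; rewrite mulrA ff eq_sym (negbTE ay) mul0r.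
have betae y : beta * inc_e F (mu y) = f y * inc_e F (mu y).
  rewrite /beta mulr_suml (bigD1 y) //= big1 ?addr0 -?mulrA ?ee ?eqxx //.
  by move=> a ay; rewrite -mulrA ee (negbTE ay) mulr0.
have beta'f y : beta' * f y = inc_e F (mu y) * f y.
  rewrite /beta' mulr_suml (bigD1 y) //= big1 ?addr0 -?mulrA ?fidem //.
  by move=> a ay; rewrite -mulrA ff (negbTE ay) mulr0.
have ebeta' y : inc_e F (mu y) * beta' = inc_e F (mu y) * f y.
  rewrite /beta' mulr_sumr (bigD1 y) //= big1 ?addr0 ?mulrA ?ee ?eqxx //.
  by move=> a ay; rewrite mulrA ee eq_sym (negbTE ay) mul0r.
have h1 : beta' * beta = 1.
  rewrite /beta mulr_sumr -sum_e [RHS](reindex_inj muinj) /=.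
  apply: eq_bigr => y _; rewrite mulrA beta'f efe mu1 scale1 //.
have dbeta z : beta (z, z) = 1.
  have [g gK Kg] := mubij.
  rewrite /beta sumE (bigD1 (g z)) //= big1 ?addr0; last first.
    move=> a az; rewrite diag_mul eE; case: (eqVneq z (mu a)) => [za|]; last by rewrite mulr0.
  by move: az; rewrite za gK eqxx.
  by rewrite diag_mul eE Kg eqxx mulr1; have := mu1 (g z); rewrite Kg.
have dbeta' z : beta' (z, z) = 1.
  have [g gK Kg] := mubij.
  rewrite /beta' sumE (bigD1 (g z)) //= big1 ?addr0; last first.
    move=> a az; rewrite diag_mul eE; case: (eqVneq z (mu a)) => [za|]; last by rewrite mul0r.
  by move: az; rewrite za gK eqxx.
  by rewrite diag_mul eE Kg eqxx mul1r; have := mu1 (g z); rewrite Kg.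
have h2 : beta * beta' = 1.
  have P2 : (beta * beta') * (beta * beta') = beta * beta'.
    by rewrite mulrA -(mulrA beta) h1 mulr1.
  apply/eqP; rewrite eq_sym -subr_eq0; apply/eqP; apply: idem_diag0.
    by rewrite mulrBl !mulrBr P2 !mulr1 !mul1r subrr subr0.
  by move=> z; rewrite addE scaleE oneE eqxx diag_mul dbeta dbeta' mulr1 mulN1r subrr.
exists beta, beta', mu; split => // y.
rewrite -/(f y).
have E2 : f y = f y * beta * (beta' * f y) by rewrite mulrA -(mulrA (f y)) h2 mulr1 fidem.
rewrite {1}E2 fbeta beta'f betae -!mulrA ebeta'.
by rewrite [inc_e F (mu y) * (inc_e F (mu y) * _)]mulrA ee eqxx.
Qed.
End R.

Theorem lemma4p1 (d : Order.disp_t) (X : finPOrderType d) (F : fieldType)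
  (phi : incidence X F -> incidence X F) :
  poset_connected X ->
  jordan_automorphism phi ->
  exists (beta beta_inv : incidence X F) (lambda : X -> X),
    [/\ inc_mul beta beta_inv = inc_one X F,
        inc_mul beta_inv beta = inc_one X F,
        bijective lambda &
        forall x : X, phi (inc_e F x) = inc_mul (inc_mul beta (inc_e F (lambda x))) beta_inv].
Proof.
move=> _ [bij lin sq tr]; exact: (main bij lin sq tr).
Qed.
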